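(* Let $K, T \geq 1$ be integers, let $r_{tk}$ ($t = 1,\ldots,T$, $k = 1,\ldots,K$) be real numbers (the return of security $k$ at time $t$), and let $H_1,\ldots,H_K > 0$ be thresholds. For each security $k$ and time $t$, classify the observation $r_{tk}$ as $U$ (up) if $r_{tk} \geq H_k$, as $D$ (down) if $r_{tk} \leq -H_k$, and as $N$ (neutral) if $-H_k < r_{tk} < H_k$. For $p,q \in \{U,N,D\}$ and securities $i,j$, let $n_{ij}^{pq}$ be the number of times $t \in \{1,\ldots,T\}$ at which $r_{ti}$ is in category $p$ and $r_{tj}$ is in category $q$. Assume that $n_{ij}^{NN} < T$ for all $i,j \in \{1,\ldots,K\}$. Define the $K \times K$ matrix $G^{(2)}$ with entries $$g_{ij}^{(2)} = \frac{n_{ij}^{UU} + n_{ij}^{DD} - n_{ij}^{UD} - n_{ij}^{DU}}{T - n_{ij}^{NN}}.$$ Then $G^{(2)}$ is positive semidefinite.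
   Context: In the paper the thresholds are $H_k = c\,\sigma_k$, where $c>0$ is a fixed fraction (e.g. $1/2$) and $\sigma_k$ is the sample standard deviation of the returns of security $k$; the result only uses that the thresholds are positive. The matrix $G^{(2)}$ is called Gerber Statistic 2. *)

(* Defs.v *)
From mathcomp Require Import all_boot all_order all_algebra.
From mathcomp Require Import reals.
Set Implicit Arguments. Unset Strict Implicit. Unset Printing Implicit Defensive.
Import Order.TTheory GRing.Theory Num.Theory.
Local Open Scope ring_scope.

Inductive cat := Up | Neutral | Down.

Definition cat_eqb (a b : cat) : bool :=
  match a, b with
  | Up, Up | Neutral, Neutral | Down, Down => true
  | _, _ => false end.

Section Gerber.
Variable R : realType.

Definition classify (h x : R) : cat :=
  if h <= x then Up else if x <= - h then Down else Neutral.

Definition ncount (T K : nat) (r : 'M[R]_(T, K)) (H : 'I_K -> R)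
    (p q : cat) (i j : 'I_K) : nat :=
  #|[set t : 'I_T | cat_eqb (classify (H i) (r t i)) p
                   && cat_eqb (classify (H j) (r t j)) q]|.

Definition gerber2 (T K : nat) (r : 'M[R]_(T, K)) (H : 'I_K -> R) : 'M[R]_K :=
  \matrix_(i, j)
    (((ncount r H Up Up i j)%:R + (ncount r H Down Down i j)%:R
      - (ncount r H Up Down i j)%:R - (ncount r H Down Up i j)%:R)
     / (T%:R - (ncount r H Neutral Neutral i j)%:R)).

End Gerber.

Definition psd (R : realType) (n : nat) (A : 'M[R]_n) : Prop :=
  A^T = A /\ forall x : 'cV[R]_n, 0 <= (x^T *m A *m x) ord0 ord0.

(* Main.v *)
Require Import Defs.
From mathcomp Require Import all_boot all_order all_fingroup all_algebra.
From mathcomp Require Import ring lra zify.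
Set Implicit Arguments. Unset Strict Implicit. Unset Printing Implicit Defensive.

Definition firstp (n : nat) (s : {perm 'I_n}) (S : {set 'I_n}) (t : 'I_n) : bool :=
  (t \in S) && [forall u in S, (nat_of_ord (s t) <= s u)%N].

Lemma firstp_uniq n (s : {perm 'I_n}) (S : {set 'I_n}) a b :
  firstp s S a -> firstp s S b -> a = b.
Proof.
case/andP=> aS /forall_inP Ha; case/andP=> bS /forall_inP Hb.
apply: (perm_inj (s:=s)); apply: val_inj => /=.
by apply/eqP; rewrite eqn_leq Ha // Hb.
Qed.

Lemma firstp_ex n (s : {perm 'I_n}) (S : {set 'I_n}) a : a \in S -> exists b, firstp s S b.
Proof.
move=> aS.
case: (arg_minnP (fun u => nat_of_ord (s u)) aS) => b bS Hb.
exists b; apply/andP; split=> //; apply/forall_inP => u uS; exact: Hb.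
Qed.

Lemma firstp_sum n (s : {perm 'I_n}) (S : {set 'I_n}) a : a \in S ->
  (\sum_(u in S) firstp s S u = 1)%N.
Proof.
move=> aS; case: (firstp_ex s aS) => b Hb.
have bS : b \in S by case/andP: Hb.
rewrite (bigD1 b) //= Hb big1 // => u /andP [_ ub].
by apply/eqP; rewrite eqb0; apply/negP => Hu; move: ub; rewrite (firstp_uniq Hu Hb) eqxx.
Qed.

Definition Pset n (S : {set 'I_n}) t := [set s : {perm 'I_n} | firstp s S t].

Lemma Pset_le n (S : {set 'I_n}) a b : a \in S -> b \in S ->
  (#|Pset S a| <= #|Pset S b|)%N.
Proof.
move=> aS bS.
rewrite -(card_imset (Pset S a) (mulgI (tperm a b))).
apply: subset_leq_card; apply/subsetP => x /imsetP [s]; rewrite !inE => /andP [_ /forall_inP Hs] ->.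
rewrite /firstp bS /=; apply/forall_inP => u uS; rewrite !permM tpermR.
have [->|ua] := eqVneq u a; first by rewrite tpermL Hs.
have [->|ub] := eqVneq u b; first by rewrite tpermR.
by rewrite tpermD 1?eq_sym // Hs.
Qed.

Lemma Pset_card n (S : {set 'I_n}) t : t \in S ->
  (#|S| * #|Pset S t| = #|{perm 'I_n}|)%N.
Proof.
move=> tS.
have -> : (#|S| * #|Pset S t| = \sum_(u in S) #|Pset S u|)%N.
  rewrite -sum_nat_const; apply: eq_bigr => u uS.
  by apply/eqP; rewrite eqn_leq !Pset_le.
rewrite (eq_bigr (fun u => \sum_s (firstp s S u : nat))); last first.
  move=> u _; rewrite -sum1_card big_mkcond /=; apply: eq_bigr => s _.
  by rewrite inE; case: firstp.
rewrite exchange_big /= (eq_bigr (fun _ => 1%N)); last by move=> s _; exact: firstp_sum tS.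
by rewrite sum1_card.
Qed.
From mathcomp Require Import reals.
Import Order.TTheory GRing.Theory Num.Theory.
Local Open Scope ring_scope.

Lemma firstp_U n (s : {perm 'I_n}) (A B : {set 'I_n}) t : t \in A -> t \in B ->
  firstp s (A :|: B) t = firstp s A t && firstp s B t.
Proof.
move=> tA tB; rewrite /firstp in_setU tA tB /=.
apply/forall_inP/andP => [H|[/forall_inP H1 /forall_inP H2]].
  by split; apply/forall_inP => u uS; apply: H; rewrite in_setU uS ?orbT.
by move=> u; rewrite in_setU => /orP [] ?; [apply: H1 | apply: H2].
Qed.

Definition sg (R : realType) (h x : R) : R :=
  match classify h x with Up => 1 | Down => -1 | Neutral => 0 end.
Definition nz (R : realType) (h x : R) : bool :=
  match classify h x with Neutral => false | _ => true end.
Definition Aset (R : realType) T K (r : 'M[R]_(T, K)) (H : 'I_K -> R) (i : 'I_K) : {set 'I_T} :=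
  [set t | nz (H i) (r t i)].

Lemma card_R (R : realType) (T : finType) (P : pred T) :
  (#|[set t | P t]|%:R : R) = \sum_t ((P t)%:R).
Proof.
rewrite -sum1_card natr_sum big_mkcond; apply: eq_bigr => t _; rewrite inE; by case: (P t).
Qed.

Lemma sg_nz (R : realType) (h x : R) : ~~ nz h x -> sg h x = 0.
Proof. by rewrite /nz /sg; case: classify. Qed.

Lemma gerber_entry (R : realType) T K (r : 'M[R]_(T, K)) H i j :
  gerber2 r H i j = (\sum_t sg (H i) (r t i) * sg (H j) (r t j)) / #|Aset r H i :|: Aset r H j|%:R.
Proof.
rewrite mxE /ncount !card_R -!big_split /= -!sumrB; congr (_ / _).
  apply: eq_bigr => t _; rewrite /sg.
  by case: classify; case: classify => /=; rewrite ?mulr1 ?mulrN ?mulr0 ?mul0r ?opprK; lra.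
have E : [set t | cat_eqb (classify (H i) (r t i)) Neutral && cat_eqb (classify (H j) (r t j)) Neutral]
   = ~: (Aset r H i :|: Aset r H j).
  by apply/setP => t; rewrite !inE /nz; case: classify; case: classify.
rewrite -card_R E.
have -> : (T%:R : R) = #|Aset r H i :|: Aset r H j|%:R + #|~: (Aset r H i :|: Aset r H j)|%:R.
  by rewrite -natrD cardsC card_ord.
by rewrite addrK card_R; apply: eq_bigr => t _; rewrite !inE.
Qed.

Definition wt (R : realType) T K (r : 'M[R]_(T, K)) (H : 'I_K -> R) (s : {perm 'I_T}) t i : R :=
  (firstp s (Aset r H i) t)%:R * sg (H i) (r t i).

Lemma entry_mul (R : realType) T K (r : 'M[R]_(T, K)) H i j :
  (0 < #|Aset r H i :|: Aset r H j|)%N ->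
  #|{perm 'I_T}|%:R * ((\sum_t sg (H i) (r t i) * sg (H j) (r t j)) / #|Aset r H i :|: Aset r H j|%:R)
  = \sum_(s : {perm 'I_T}) \sum_t wt r H s t i * wt r H s t j.
Proof.
move=> c0.
have c0' : (#|Aset r H i :|: Aset r H j|%:R : R) != 0 by rewrite pnatr_eq0 -lt0n.
rewrite exchange_big /= [_ / _]mulr_suml mulr_sumr; apply: eq_bigr => t _.
under eq_bigr => s _ do rewrite /wt mulrACA -natrM.
rewrite -mulr_suml.
have [tA|tA] := boolP (t \in Aset r H i); last first.
  rewrite (sg_nz (h := H i) (x := r t i)); first by rewrite !(mul0r, mulr0).
  by move: tA; rewrite inE.
have [tB|tB] := boolP (t \in Aset r H j); last first.
  rewrite (sg_nz (h := H j) (x := r t j)); first by rewrite !(mul0r, mulr0).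
  by move: tB; rewrite inE.
have -> : \sum_(s : {perm 'I_T}) ((firstp s (Aset r H i) t * firstp s (Aset r H j) t)%N%:R : R)
   = #|Pset (Aset r H i :|: Aset r H j) t|%:R.
  rewrite card_R; apply: eq_bigr => s _; rewrite firstp_U //.
  by case: firstp; case: firstp.
have tS : t \in Aset r H i :|: Aset r H j by rewrite in_setU tA.
rewrite -(Pset_card tS) natrM.
by field.
Qed.

Lemma card_union (R : realType) T K (r : 'M[R]_(T, K)) H i j :
  (#|Aset r H i :|: Aset r H j| + ncount r H Neutral Neutral i j = T)%N.
Proof.
rewrite /ncount.
have -> : [set t | cat_eqb (classify (H i) (r t i)) Neutral && cat_eqb (classify (H j) (r t j)) Neutral]
   = ~: (Aset r H i :|: Aset r H j).
  by apply/setP => t; rewrite !inE /nz; case: classify; case: classify.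
by rewrite cardsC card_ord.
Qed.

Theorem proposition2 (R : realType) (K T : nat) (hK : (1 <= K)%N) (hT : (1 <= T)%N)
    (r : 'M[R]_(T, K)) (H : 'I_K -> R) (hH : forall k, 0 < H k)
    (hNN : forall i j : 'I_K, (ncount r H Neutral Neutral i j < T)%N) :
  psd (gerber2 r H).
Proof.
split.
  apply/matrixP => i j; rewrite mxE !gerber_entry setUC; congr (_ / _).
  by apply: eq_bigr => t _; apply: mulrC.
move=> x.
have N0 : (0 : R) < #|{perm 'I_T}|%:R by rewrite ltr0n card_Sn fact_gt0.
have -> : (x^T *m gerber2 r H *m x) ord0 ord0
    = \sum_j \sum_i x i ord0 * x j ord0 * gerber2 r H i j.
  rewrite mxE; apply: eq_bigr => j _; rewrite mxE mulr_suml; apply: eq_bigr => i _.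
  rewrite mxE; ring.
rewrite -(pmulr_rge0 _ N0) mulr_sumr.
under eq_bigr => j _ do rewrite mulr_sumr.
have E : forall i j, #|{perm 'I_T}|%:R * (x i ord0 * x j ord0 * gerber2 r H i j)
   = \sum_(s : {perm 'I_T}) \sum_t (x i ord0 * wt r H s t i) * (x j ord0 * wt r H s t j).
  move=> i j; rewrite mulrCA gerber_entry entry_mul; last first.
    by have := card_union r H i j; have := hNN i j; lia.
  rewrite mulr_sumr; apply: eq_bigr => s _; rewrite mulr_sumr; apply: eq_bigr => t _; ring.
under eq_bigr => j _ do under eq_bigr => i _ do rewrite E.
under eq_bigr => j _ do rewrite exchange_big.
rewrite exchange_big.
under eq_bigr => s _ do under eq_bigr => j _ do rewrite exchange_big.
under eq_bigr => s _ do rewrite exchange_big.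
apply: sumr_ge0 => s _; apply: sumr_ge0 => t _.
have -> : \sum_j \sum_i (x i ord0 * wt r H s t i) * (x j ord0 * wt r H s t j)
   = (\sum_i x i ord0 * wt r H s t i) ^+ 2.
  rewrite expr2 mulr_suml exchange_big; apply: eq_bigr => i _.
  by rewrite mulr_sumr.
exact: sqr_ge0.
Qed.
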